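(* If $\varphi_1$ and $\varphi_2$ are $\bigwedge\!\!\bigwedge$-formulas, then $\varphi_1\vee\varphi_2$ is logically equivalent to a $\bigwedge\!\!\bigwedge$-formula.
   Context: The $\bigwedge\!\!\bigwedge$-formulas (of a countable language) are defined inductively: every finitary quantifier-free formula is one; if $\varphi$ is one then so are $\exists x\,\varphi$ and $\forall x\,\varphi$; if $(\varphi_i)_{i\in\omega}$ are $\bigwedge\!\!\bigwedge$-formulas with finitely many free variables in total, then the countable conjunction $\bigwedge\!\!\bigwedge_{i\in\omega}\varphi_i$ (in $\mathcal{L}_{\omega_1\omega}$) is one. *)

(* Defs.v *)
From mathcomp Require Import all_boot.
Unset Printing Implicit Defensive.

Record signature := Signature {
  fsym : countType;
  farity : fsym -> nat;
  rsym : countType;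
  rarity : rsym -> nat }.

Section Infinitary.
Variable L : signature.

Inductive term : Type :=
  | Var (x : nat)
  | App (f : fsym L) (args : 'I_(farity L f) -> term).

Inductive formula : Type :=
  | FEq (t1 t2 : term)
  | FRel (r : rsym L) (args : 'I_(rarity L r) -> term)
  | FNot (phi : formula)
  | FAnd (phi psi : formula)
  | FOr (phi psi : formula)
  | FExists (x : nat) (phi : formula)
  | FForall (x : nat) (phi : formula)
  | FBigAnd (phis : nat -> formula)
  | FBigOr (phis : nat -> formula).

Inductive occurs (x : nat) : term -> Prop :=
  | occ_var : occurs x (Var x)
  | occ_app f args i : occurs x (args i) -> occurs x (App f args).

Inductive free (x : nat) : formula -> Prop :=
  | free_eq_l t1 t2 : occurs x t1 -> free x (FEq t1 t2)
  | free_eq_r t1 t2 : occurs x t2 -> free x (FEq t1 t2)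
  | free_rel r args i : occurs x (args i) -> free x (FRel r args)
  | free_not phi : free x phi -> free x (FNot phi)
  | free_and_l phi psi : free x phi -> free x (FAnd phi psi)
  | free_and_r phi psi : free x psi -> free x (FAnd phi psi)
  | free_or_l phi psi : free x phi -> free x (FOr phi psi)
  | free_or_r phi psi : free x psi -> free x (FOr phi psi)
  | free_ex y phi : x <> y -> free x phi -> free x (FExists y phi)
  | free_all y phi : x <> y -> free x phi -> free x (FForall y phi)
  | free_bigand phis i : free x (phis i) -> free x (FBigAnd phis)
  | free_bigor phis i : free x (phis i) -> free x (FBigOr phis).

Inductive qf_finitary : formula -> Prop :=
  | qf_eq t1 t2 : qf_finitary (FEq t1 t2)
  | qf_rel r args : qf_finitary (FRel r args)
  | qf_not phi : qf_finitary phi -> qf_finitary (FNot phi)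
  | qf_and phi psi : qf_finitary phi -> qf_finitary psi -> qf_finitary (FAnd phi psi)
  | qf_or phi psi : qf_finitary phi -> qf_finitary psi -> qf_finitary (FOr phi psi).

Definition finitely_many_free (phis : nat -> formula) : Prop :=
  exists N : nat, forall i x, free x (phis i) -> x < N.

Inductive WW : formula -> Prop :=
  | WW_qf phi : qf_finitary phi -> WW phi
  | WW_ex x phi : WW phi -> WW (FExists x phi)
  | WW_all x phi : WW phi -> WW (FForall x phi)
  | WW_bigand phis : (forall i, WW (phis i)) -> finitely_many_free phis ->
      WW (FBigAnd phis).

Record structure := Structure {
  dom : Type;
  dom_inhabited : inhabited dom;
  funI : forall f : fsym L, ('I_(farity L f) -> dom) -> dom;
  relI : forall r : rsym L, ('I_(rarity L r) -> dom) -> Prop }.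

Fixpoint eval {M : structure} (v : nat -> dom M) (t : term) : dom M :=
  match t with
  | Var x => v x
  | App f args => funI M f (fun i => eval v (args i))
  end.

Definition update {M : structure} (v : nat -> dom M) (x : nat) (d : dom M) :
  nat -> dom M := fun y => if y == x then d else v y.

Fixpoint sat {M : structure} (v : nat -> dom M) (phi : formula) : Prop :=
  match phi with
  | FEq t1 t2 => eval v t1 = eval v t2
  | FRel r args => relI M r (fun i => eval v (args i))
  | FNot phi => ~ sat v phi
  | FAnd phi psi => sat v phi /\ sat v psi
  | FOr phi psi => sat v phi \/ sat v psi
  | FExists x phi => exists d : dom M, sat (update v x d) phi
  | FForall x phi => forall d : dom M, sat (update v x d) phi
  | FBigAnd phis => forall i, sat v (phis i)
  | FBigOr phis => exists i, sat v (phis i)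
  end.

Definition log_equiv (phi psi : formula) : Prop :=
  forall (M : structure) (v : nat -> dom M), sat v phi <-> sat v psi.

End Infinitary.

Arguments Var {L} x.
Arguments App {L} f args.
Arguments FEq {L} t1 t2.
Arguments FRel {L} r args.
Arguments FNot {L} phi.
Arguments FAnd {L} phi psi.
Arguments FOr {L} phi psi.
Arguments FExists {L} x phi.
Arguments FForall {L} x phi.
Arguments FBigAnd {L} phis.
Arguments FBigOr {L} phis.
Arguments occurs {L} x t.
Arguments free {L} x phi.
Arguments qf_finitary {L} phi.
Arguments finitely_many_free {L} phis.
Arguments WW {L} phi.
Arguments log_equiv {L} phi psi.

(* Main.v *)
Require Import Defs.
From mathcomp Require Import all_boot.
From Stdlib Require Import Classical FunctionalExtensionality ClassicalEpsilon Lia.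

Fixpoint rt {L : signature} (pi : nat -> nat) (t : term L) : term L :=
  match t with
  | Var x => Var (pi x)
  | App f args => App f (fun i => rt pi (args i))
  end.

Fixpoint rf {L : signature} (pi : nat -> nat) (p : formula L) : formula L :=
  match p with
  | FEq a b => FEq (rt pi a) (rt pi b)
  | FRel r args => FRel r (fun i => rt pi (args i))
  | FNot p => FNot (rf pi p)
  | FAnd p q => FAnd (rf pi p) (rf pi q)
  | FOr p q => FOr (rf pi p) (rf pi q)
  | FExists x p => FExists (pi x) (rf pi p)
  | FForall x p => FForall (pi x) (rf pi p)
  | FBigAnd ps => FBigAnd (fun i => rf pi (ps i))
  | FBigOr ps => FBigOr (fun i => rf pi (ps i))
  end.

Fixpoint occ {L : signature} (z : nat) (t : term L) : Prop :=
  match t with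
  | Var x => z = x
  | App f args => exists i, occ z (args i)
  end.

Fixpoint fr {L : signature} (z : nat) (p : formula L) : Prop :=
  match p with
  | FEq a b => occ z a \/ occ z b
  | FRel r args => exists i, occ z (args i)
  | FNot p => fr z p
  | FAnd p q => fr z p \/ fr z q
  | FOr p q => fr z p \/ fr z q
  | FExists x p => z <> x /\ fr z p
  | FForall x p => z <> x /\ fr z p
  | FBigAnd ps => exists i, fr z (ps i)
  | FBigOr ps => exists i, fr z (ps i)
  end.

Lemma occurs_occ L z (t : term L) : occurs z t <-> occ z t.
Proof.
split.
- elim => [|f args i _ IH] /=; [by []| by exists i].
- elim: t => [x /= ->|f args IH [i Hi]]; first by constructor.
  exact: occ_app (IH _ Hi).
Qed.

Lemma free_fr L z (p : formula L) : free z p <-> fr z p.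
Proof.
split.
- elim => /=.
  + by move=> t1 t2 H; left; apply/occurs_occ.
  + by move=> t1 t2 H; right; apply/occurs_occ.
  + by move=> r args i H; exists i; apply/occurs_occ.
  + by [].
  + by move=> ? ? _ H; left.
  + by move=> ? ? _ H; right.
  + by move=> ? ? _ H; left.
  + by move=> ? ? _ H; right.
  + by [].
  + by [].
  + by move=> ps i _ H; exists i.
  + by move=> ps i _ H; exists i.
- elim: p => /=.
  + move=> a b [H|H]; [apply: free_eq_l|apply: free_eq_r]; exact/occurs_occ.
  + move=> r args [i H]; apply: free_rel (proj2 (occurs_occ _ _ _) H).
  + by move=> p IH H; constructor; auto.
  + by move=> p IHp q IHq [H|H]; [apply: free_and_l|apply: free_and_r]; auto.
  + by move=> p IHp q IHq [H|H]; [apply: free_or_l|apply: free_or_r]; auto.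
  + by move=> x p IH [H1 H2]; constructor; auto.
  + by move=> x p IH [H1 H2]; constructor; auto.
  + by move=> ps IH [i H]; apply: free_bigand (IH i H).
  + by move=> ps IH [i H]; apply: free_bigor (IH i H).
Qed.

Lemma eval_rt L (M : structure L) (v : nat -> dom L M) pi t :
  eval L v (rt pi t) = eval L (v \o pi) t.
Proof.
elim: t => [x|f args IH] //=; congr funI; apply: functional_extensionality => i; exact: IH.
Qed.

Lemma sat_rf L (M : structure L) pi (Hpi : injective pi) p (v : nat -> dom L M) :
  sat L v (rf pi p) <-> sat L (v \o pi) p.
Proof.
elim: p v => /=.
- by move=> a b v; rewrite !eval_rt.
- move=> r args v.
  have -> : (fun i => eval L v (rt pi (args i))) = (fun i => eval L (v \o pi) (args i)).
    by apply: functional_extensionality => i; rewrite eval_rt.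
  by [].
- by move=> p IH v; rewrite IH.
- by move=> p IHp q IHq v; rewrite IHp IHq.
- by move=> p IHp q IHq v; rewrite IHp IHq.
- move=> x p IH v; split=> [[d Hd]|[d Hd]]; exists d; move: Hd; rewrite IH;
  have -> // : (update L v (pi x) d \o pi) = update L (v \o pi) x d;
  by apply: functional_extensionality => z; rewrite /update /= (inj_eq Hpi).
- move=> x p IH v; split=> Hd d; move: (Hd d); rewrite IH;
  have -> // : (update L v (pi x) d \o pi) = update L (v \o pi) x d;
  by apply: functional_extensionality => z; rewrite /update /= (inj_eq Hpi).
- by move=> ps IH v; split=> H i; move: (H i); rewrite IH.
- by move=> ps IH v; split=> [[i H]|[i H]]; exists i; move: H; rewrite IH.
Qed.

Lemma eval_coin L (M : structure L) (v w : nat -> dom L M) t :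
  (forall z, occ z t -> v z = w z) -> eval L v t = eval L w t.
Proof.
elim: t => [x|f args IH] /= H; first by apply: H.
congr funI; apply: functional_extensionality => i; apply: IH => z Hz; apply: H; by exists i.
Qed.

Lemma sat_coin L (M : structure L) p (v w : nat -> dom L M) :
  (forall z, fr z p -> v z = w z) -> (sat L v p <-> sat L w p).
Proof.
elim: p v w => /=.
- move=> a b v w H; rewrite (@eval_coin _ _ v w a) ?(@eval_coin _ _ v w b) //; move=> z Hz; apply: H; auto.
- move=> r args v w H.
  have -> // : (fun i => eval L v (args i)) = (fun i => eval L w (args i)).
  apply: functional_extensionality => i; apply: eval_coin => z Hz; apply: H; by exists i.
- move=> p IH v w H; by rewrite (IH v w).
- move=> p IHp q IHq v w H; rewrite (IHp v w) ?(IHq v w) //; move=> z Hz; apply: H; auto.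
- move=> p IHp q IHq v w H; rewrite (IHp v w) ?(IHq v w) //; move=> z Hz; apply: H; auto.
- move=> x p IH v w H.
  have E : forall d, sat L (update L v x d) p <-> sat L (update L w x d) p.
    move=> d; apply: IH => z Hz; rewrite /update; case: eqP => // /eqP Hne.
    apply: H; split => //; exact/eqP.
  by split=> [[d Hd]|[d Hd]]; exists d; apply/E.
- move=> x p IH v w H.
  have E : forall d, sat L (update L v x d) p <-> sat L (update L w x d) p.
    move=> d; apply: IH => z Hz; rewrite /update; case: eqP => // /eqP Hne.
    apply: H; split => //; exact/eqP.
  by split=> Hd d; apply/E.
- move=> ps IH v w H; split=> Hi i; [apply/(IH i v w)|apply/(IH i v w)]; auto;
  move=> z Hz; apply: H; by exists i.
- move=> ps IH v w H; split=> [[i Hi]|[i Hi]]; exists i; [apply/(IH i v w)|apply/(IH i v w)]; auto;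
  move=> z Hz; apply: H; by exists i.
Qed.
From mathcomp Require Import zify.

Definition sw (x y z : nat) : nat := if z == x then y else if z == y then x else z.

Lemma sw_x x y : sw x y x = y. Proof. by rewrite /sw eqxx. Qed.
Lemma sw_y x y : sw x y y = x. Proof. rewrite /sw eqxx; case: eqP => // ->. Qed.
Lemma sw_o x y z : z <> x -> z <> y -> sw x y z = z.
Proof. by rewrite /sw => /eqP/negbTE -> /eqP/negbTE ->. Qed.
Lemma sw_inv x y z : sw x y (sw x y z) = z.
Proof.
rewrite /sw; case: (eqVneq z x) => [->|hx]; first by rewrite eqxx; case: eqP.
case: (eqVneq z y) => [->|hy]; first by rewrite eqxx.
by rewrite (negbTE hx) (negbTE hy).
Qed.
Lemma sw_inj x y : injective (sw x y).
Proof. by move=> a b H; rewrite -(sw_inv x y a) H sw_inv. Qed.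

Lemma occ_rt L pi z (t : term L) : occ z (rt pi t) -> exists u, z = pi u /\ occ u t.
Proof.
elim: t => [x|f args IH] /=; first by move=> ->; exists x.
move=> [i /IH [u [-> H]]]; exists u; split => //; by exists i.
Qed.

Lemma fr_rf L pi (Hpi : injective pi) z (p : formula L) :
  fr z (rf pi p) -> exists u, z = pi u /\ fr u p.
Proof.
elim: p z => /=.
- move=> a b z [/occ_rt [u [-> H]]|/occ_rt [u [-> H]]]; exists u; auto.
- move=> r args z [i /occ_rt [u [-> H]]]; exists u; split => //; by exists i.
- by [].
- move=> p IHp q IHq z [/IHp [u [-> H]]|/IHq [u [-> H]]]; exists u; auto.
- move=> p IHp q IHq z [/IHp [u [-> H]]|/IHq [u [-> H]]]; exists u; auto.
- move=> x p IH z [Hx /IH [u [E H]]]; exists u; split => //; split => //; move=> E2; apply: Hx; by rewrite E E2.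
- move=> x p IH z [Hx /IH [u [E H]]]; exists u; split => //; split => //; move=> E2; apply: Hx; by rewrite E E2.
- move=> ps IH z [i /IH [u [-> H]]]; exists u; split => //; by exists i.
- move=> ps IH z [i /IH [u [-> H]]]; exists u; split => //; by exists i.
Qed.

Lemma bound_nat N (P : nat -> nat -> Prop) :
  (forall u, u < N -> exists M, forall z, P u z -> z < M) ->
  exists M, forall u z, u < N -> P u z -> z < M.
Proof.
elim: N => [|N IH] H; first by exists 0.
have [M1 H1] : exists M, forall u z, u < N -> P u z -> z < M.
  apply: IH => u Hu; apply: H; lia.
have [M2 H2] := H N (leqnn _).
exists (maxn M1 M2); move=> u z Hu Hz.
case: (ltnP u N) => Hu'.
  have := H1 _ _ Hu' Hz; lia.
have E : u = N by lia.
subst u; have := H2 _ Hz; lia.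
Qed.

Lemma term_bound L (t : term L) : exists N, forall z, occ z t -> z < N.
Proof.
elim: t => [x|f args IH]; first by exists x.+1; move=> z /= ->.
have [M HM] := bound_nat (farity L f)
   (fun u z => exists h : u < farity L f, occ z (args (Ordinal h)))
   (fun u Hu => let: ex_intro N HN := IH (Ordinal Hu) in
      ex_intro _ N (fun z '(ex_intro h Hz) => HN z (eq_rect _ (fun h => occ z (args (Ordinal h))) Hz _ (eq_irrelevance _ _)))).
exists M; move=> z /= [i Hi]; apply: (HM i); first exact: ltn_ord.
exists (ltn_ord i); have -> : Ordinal (ltn_ord i) = i by apply: val_inj.
by [].
Qed.

Lemma qf_bound L (p : formula L) : qf_finitary p -> exists N, forall z, fr z p -> z < N.
Proof.
elim => /=.
- move=> a b; have [N1 H1] := term_bound _ a; have [N2 H2] := term_bound _ b.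
  exists (N1 + N2); move=> z [/H1|/H2]; lia.
- move=> r args.
  have [M HM] := bound_nat (rarity L r)
   (fun u z => exists h : u < rarity L r, occ z (args (Ordinal h)))
   (fun u Hu => let: ex_intro N HN := term_bound _ (args (Ordinal Hu)) in
      ex_intro _ N (fun z '(ex_intro h Hz) => HN z (eq_rect _ (fun h => occ z (args (Ordinal h))) Hz _ (eq_irrelevance _ _)))).
  exists M; move=> z /= [i Hi]; apply: (HM i); first exact: ltn_ord.
  exists (ltn_ord i); have -> : Ordinal (ltn_ord i) = i by apply: val_inj.
by [].
- by [].
- move=> p1 q1 _ [N1 H1] _ [N2 H2]; exists (N1 + N2); move=> z [/H1|/H2]; lia.
- move=> p1 q1 _ [N1 H1] _ [N2 H2]; exists (N1 + N2); move=> z [/H1|/H2]; lia.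
Qed.

Lemma WW_bound L (p : formula L) : WW p -> exists N, forall z, fr z p -> z < N.
Proof.
elim => /=.
- exact: qf_bound.
- by move=> x q _ [N H]; exists N; move=> z [_ /H].
- by move=> x q _ [N H]; exists N; move=> z [_ /H].
- move=> ps _ _ [N H]; exists N; move=> z [i Hi]; apply: (H i); exact/free_fr.
Qed.

Lemma qf_rf L pi (p : formula L) : qf_finitary p -> qf_finitary (rf pi p).
Proof. elim => /=; by constructor. Qed.

Lemma WW_rf L pi (Hpi : injective pi) (p : formula L) : WW p -> WW (rf pi p).
Proof.
elim => /=.
- by move=> q /(qf_rf _ pi) H; constructor.
- by move=> x q _ H; apply: WW_ex.
- by move=> x q _ H; apply: WW_all.
- move=> ps _ IH [N HN]; apply: WW_bigand => //.
  have [M HM] := bound_nat N (fun u z => z = pi u)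
     (fun u _ => ex_intro _ (pi u).+1 (fun z E => eq_ind_r (fun z => z < (pi u).+1) (ltnSn _) E)).
  exists M; move=> i z /free_fr /(fr_rf _ _ Hpi) [u [-> Hu]].
  apply: (HM u) => //; apply: (HN i); exact/free_fr.
Qed.

Definition G {L} (a b : formula L) := exists psi, WW psi /\ log_equiv (FOr a b) psi /\
  (forall z, fr z psi -> fr z a \/ fr z b).

Lemma G_sym L (a b : formula L) : G a b -> G b a.
Proof.
move=> [psi [W [E F]]]; exists psi; split => //; split.
- move=> M v; rewrite -E /=; tauto.
- move=> z /F; tauto.
Qed.

Lemma G_qf L (a b : formula L) : qf_finitary a -> qf_finitary b -> G a b.
Proof.
move=> Ha Hb; exists (FOr a b); split; first by apply: WW_qf; constructor.
by split => // M v.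
Qed.

Lemma ex_step L x (p q : formula L) : WW p -> WW q ->
  (forall pi, injective pi -> G p (rf pi q)) -> G (FExists x p) q.
Proof.
move=> Wp Wq IH.
have [Np Hp] := WW_bound _ _ Wp; have [Nq Hq] := WW_bound _ _ Wq.
set y := Np + Nq + x + 1.
have yx : y <> x by rewrite /y; lia.
have yp : forall z, fr z p -> z <> y by move=> z /Hp; rewrite /y; lia.
have yq : forall z, fr z q -> z <> y by move=> z /Hq; rewrite /y; lia.
have [chi [Wc [Ec Fc]]] := IH _ (sw_inj x y).
exists (FExists y (rf (sw x y) chi)); split; first by apply: WW_ex; apply: WW_rf => //; exact: sw_inj.
split.
- move=> M v /=.
  have key : forall d, sat L (update L v y d) (rf (sw x y) chi) <->
                       sat L (update L v x d) p \/ sat L v q.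
    move=> d; rewrite sat_rf; last exact: sw_inj.
    rewrite -Ec /= sat_rf; last exact: sw_inj.
    rewrite (@sat_coin _ _ p _ (update L v x d)); last first.
      move=> z Hz; rewrite /update /=.
      case: (eqVneq z x) => [->|hzx]; first by rewrite sw_x eqxx.
      rewrite sw_o; [|exact/eqP|exact: yp].
      by case: eqP => // E; case: (yp z Hz E).
    rewrite (@sat_coin _ _ q _ v) //.
    move=> z Hz; rewrite /= sw_inv /update; case: eqP => // E; exfalso; exact: (yq z Hz E).
  split.
  + case=> [[d Hd]|Hq'].
      by exists d; apply/key; left.
    case: (dom_inhabited _ M) => d; exists d; apply/key; by right.
  + move=> [d /key [H|H]]; [left; by exists d | by right].
- move=> z /= [zy /(fr_rf _ _ (@sw_inj x y)) [u [E /Fc [Hu|Hu]]]]; subst z.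
  + left; have uy := yp u Hu.
    case: (eqVneq u x) => [E|hux]; first by exfalso; apply: zy; rewrite E sw_x.
    rewrite sw_o //; last exact/eqP. split => //; exact/eqP.
  + right; move: Hu => /(fr_rf _ _ (@sw_inj x y)) [w [-> Hw]]; by rewrite sw_inv.
Qed.

Lemma all_step L x (p q : formula L) : WW p -> WW q ->
  (forall pi, injective pi -> G p (rf pi q)) -> G (FForall x p) q.
Proof.
move=> Wp Wq IH.
have [Np Hp] := WW_bound _ _ Wp; have [Nq Hq] := WW_bound _ _ Wq.
set y := Np + Nq + x + 1.
have yx : y <> x by rewrite /y; lia.
have yp : forall z, fr z p -> z <> y by move=> z /Hp; rewrite /y; lia.
have yq : forall z, fr z q -> z <> y by move=> z /Hq; rewrite /y; lia.
have [chi [Wc [Ec Fc]]] := IH _ (sw_inj x y).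
exists (FForall y (rf (sw x y) chi)); split; first by apply: WW_all; apply: WW_rf => //; exact: sw_inj.
split.
- move=> M v /=.
  have key : forall d, sat L (update L v y d) (rf (sw x y) chi) <->
                       sat L (update L v x d) p \/ sat L v q.
    move=> d; rewrite sat_rf; last exact: sw_inj.
    rewrite -Ec /= sat_rf; last exact: sw_inj.
    rewrite (@sat_coin _ _ p _ (update L v x d)); last first.
      move=> z Hz; rewrite /update /=.
      case: (eqVneq z x) => [->|hzx]; first by rewrite sw_x eqxx.
      rewrite sw_o; [|exact/eqP|exact: yp].
      by case: eqP => // E; case: (yp z Hz E).
    rewrite (@sat_coin _ _ q _ v) //.
    move=> z Hz; rewrite /= sw_inv /update; case: eqP => // E; exfalso; exact: (yq z Hz E).
  split.
  + case=> [Hd|Hq'] d; apply/key; by [left|right].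
  + move=> H; case: (classic (sat L v q)) => Hq'; first by right.
    left => d; by case: (proj1 (key d) (H d)).
- move=> z /= [zy /(fr_rf _ _ (@sw_inj x y)) [u [E /Fc [Hu|Hu]]]]; subst z.
  + left; have uy := yp u Hu.
    case: (eqVneq u x) => [E|hux]; first by exfalso; apply: zy; subst; rewrite sw_x.
    rewrite sw_o //; last exact/eqP. split => //; exact/eqP.
  + right; move: Hu => /(fr_rf _ _ (@sw_inj x y)) [w [-> Hw]]; by rewrite sw_inv.
Qed.

Lemma bigand_step L (ps : nat -> formula L) q : (forall i, G (ps i) q) ->
  finitely_many_free ps -> WW q -> G (FBigAnd ps) q.
Proof.
move=> H [N HN] Wq; have [Nq Hq] := WW_bound _ _ Wq.
pose chi i := proj1_sig (constructive_indefinite_description _ (H i)).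
have Hc i : WW (chi i) /\ log_equiv (FOr (ps i) q) (chi i) /\
  (forall z, fr z (chi i) -> fr z (ps i) \/ fr z q).
  exact: (proj2_sig (constructive_indefinite_description _ (H i))).
exists (FBigAnd chi); split.
  apply: WW_bigand; first by move=> i; case: (Hc i).
  exists (N + Nq) => i z /free_fr /(proj2 (proj2 (Hc i))) [/free_fr/HN|/Hq]; lia.
split.
- move=> M v /=; split.
  + move=> Ho i; apply/(proj1 (proj2 (Hc i))) => /=; case: Ho; auto.
  + move=> Ha; case: (classic (sat L v q)) => Hq'; first by right.
    left => i; have := proj2 (proj1 (proj2 (Hc i)) M v) (Ha i); case => //.
- move=> z /= [i /(proj2 (proj2 (Hc i))) [Hz|Hz]]; [left; by exists i| by right].
Qed.

Lemma qf_case L (b : formula L) : WW b -> forall a, qf_finitary a -> G a b.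
Proof.
elim.
- by move=> p Hp a Ha; apply: G_qf.
- move=> x p Wp IH a Ha; apply: G_sym; apply: ex_step => //; first exact: WW_qf.
  move=> pi Hpi; apply: G_sym; apply: IH; exact: qf_rf.
- move=> x p Wp IH a Ha; apply: G_sym; apply: all_step => //; first exact: WW_qf.
  move=> pi Hpi; apply: G_sym; apply: IH; exact: qf_rf.
- move=> ps Wps IH Hf a Ha; apply: G_sym; apply: bigand_step => //; last exact: WW_qf.
  move=> i; apply: G_sym; exact: IH.
Qed.

Lemma main L (a : formula L) : WW a -> forall b, WW b -> G a b.
Proof.
elim.
- move=> p Hp b Wb; exact: qf_case.
- move=> x p Wp IH b Wb; apply: ex_step => // pi Hpi; apply: IH; exact: WW_rf.
- move=> x p Wp IH b Wb; apply: all_step => // pi Hpi; apply: IH; exact: WW_rf.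
- move=> ps Wps IH Hf b Wb; apply: bigand_step => // i; exact: IH.
Qed.

Theorem lemma4p1 (L : signature) (phi1 phi2 : formula L) :
  WW phi1 -> WW phi2 ->
  exists psi : formula L, WW psi /\ log_equiv (FOr phi1 phi2) psi.
Proof.
move=> W1 W2; have [psi [W [E _]]] := main _ _ W1 _ W2; by exists psi.
Qed.
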